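(* Let $p$ be a probability density on $\mathbb{R}^d$ that is log-concave, strictly positive on $\mathbb{R}^d$, and three times differentiable with $\sup_x\|\nabla^3\ln p(x)\|_F<\infty$. Let $\tau>0$, $y\in\mathbb{R}^d$, $F(x):=\tfrac12\|y-x\|^2-\tau\ln p(x)$ and, for $\sigma>0$, $F_\sigma(x):=\tfrac12\|y-x\|^2-\tau\ln p_\sigma(x)$. Let $\mathrm{prox}_{-\tau\ln p}(y):=\arg\min F$ and $\mathrm{prox}_{-\tau\ln p_\sigma}(y):=\arg\min F_\sigma$. Then $\mathrm{prox}_{-\tau\ln p_\sigma}(y)\to\mathrm{prox}_{-\tau\ln p}(y)$ as $\sigma\to0$.
   Context: For $\sigma>0$, $p_\sigma$ denotes the density of $X+\sigma\varepsilon$ where $X\sim p$ and $\varepsilon\sim\mathcal N(0,I_d)$ are independent. For a tensor $A\in\mathbb{R}^{d\times d\times d}$, $\|A\|_F=(\sum_{i,j,k}A_{ijk}^2)^{1/2}$. Both $F$ and $F_\sigma$ are strongly convex, so the minimisers are unique. *)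

(* Defs.v *)
From HB Require Import structures.
From mathcomp Require Import all_boot all_order all_algebra.
From mathcomp Require Import all_classical all_reals all_analysis.
Set Implicit Arguments. Unset Strict Implicit. Unset Printing Implicit Defensive.
Import Order.TTheory GRing.Theory Num.Theory.
Import numFieldNormedType.Exports.
Local Open Scope classical_set_scope.
Local Open Scope ring_scope.

Section Defs.
Variable R : realType.

Definition sqnorm d (v : 'rV[R]_d) : R := \sum_(i < d) (v ord0 i) ^+ 2.

Definition ebasis d (i : 'I_d) : 'rV[R]_d := \row_(j < d) (i == j)%:R.

Definition partial d (g : 'rV[R]_d -> R) (i : 'I_d) : 'rV[R]_d -> R :=
  fun x => 'D_(ebasis i) g x.

(** Lebesgue integral over R^d of a nonnegative extended-real function,
    computed as the iterated one-dimensional Lebesgue integral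
    (equal to the integral w.r.t. Lebesgue measure on R^d by Tonelli
    for nonnegative Borel functions). *)
Fixpoint iint (d : nat) : ('rV[R]_d -> \bar R) -> \bar R :=
  match d with
  | 0 => fun f => f 0
  | d'.+1 => fun f =>
      (\int[@lebesgue_measure R]_(t in setT)
         iint (fun v : 'rV[R]_d' => f (row_mx (\row_(j < 1) t) v)))%E
  end.

Definition is_density d (p : 'rV[R]_d -> R) : Prop :=
  (forall x, 0 <= p x) /\ iint (fun x => (p x)%:E) = 1%E.

Definition log_concave d (p : 'rV[R]_d -> R) : Prop :=
  forall (x z : 'rV[R]_d) (t : R), 0 <= t <= 1 ->
    t * ln (p x) + (1 - t) * ln (p z) <= ln (p (t *: x + (1 - t) *: z)).

Definition thrice_differentiable d (g : 'rV[R]_d -> R) : Prop :=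
  [/\ forall x, differentiable g x,
      forall i x, differentiable (partial g i) x &
      forall i j x, differentiable (partial (partial g j) i) x].

Definition third_deriv_frob2 d (g : 'rV[R]_d -> R) (x : 'rV[R]_d) : R :=
  \sum_(i < d) \sum_(j < d) \sum_(k < d)
     (partial (partial (partial g k) j) i x) ^+ 2.

Definition gauss_kernel d (sigma : R) (v : 'rV[R]_d) : R :=
  (Num.sqrt (2 * pi * sigma ^+ 2))^-1 ^+ d * expR (- sqnorm v / (2 * sigma ^+ 2)).

(** p_sigma : density of X + sigma * eps, i.e. convolution of p with the
    Gaussian kernel *)
Definition smoothed d (p : 'rV[R]_d -> R) (sigma : R) (x : 'rV[R]_d) : R :=
  fine (iint (fun z => (p z * gauss_kernel sigma (x - z))%:E)).

Definition prox_obj d (q : 'rV[R]_d -> R) (tau : R) (y x : 'rV[R]_d) : R :=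
  2^-1 * sqnorm (y - x) - tau * ln (q x).

Definition is_argmin d (F : 'rV[R]_d -> R) (x : 'rV[R]_d) : Prop :=
  forall z, F x <= F z.

End Defs.

(* Main.v *)
Require Import Defs.
From HB Require Import structures.
From mathcomp Require Import all_boot all_order all_algebra.
From mathcomp Require Import all_classical all_reals all_analysis.
From mathcomp Require Import ring lra measurable_realfun normal_distribution.
Import Order.TTheory GRing.Theory Num.Theory.
Import numFieldNormedType.Exports.
Local Open Scope classical_set_scope.
Local Open Scope ring_scope.
Section S1.
Variable R : realType.
Local Notation mu := (@lebesgue_measure R).

Lemma mgf (s a b : R) : s != 0 ->
  (\int[mu]_t (expR (b * (t - a)) * normal_pdf a s t)%:E
    = (expR (b^+2 * s^+2 / 2))%:E)%E.
Proof.
move=> s0.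
transitivity (\int[mu]_t ((expR (b^+2*s^+2/2))%:E *
   (normal_pdf (a + b * s^+2) s t)%:E))%E.
  apply: eq_integral => t _; rewrite -EFinM; congr EFin.
  rewrite !normal_pdfE // /normal_fun mulrCA [RHS]mulrCA; congr (_ * _).
  rewrite -!expRD; congr expR.
  rewrite (_ : t - (a + b*s^+2) = (t - a) - b * s^+2); last by ring.
  by field.
rewrite ge0_integralZl_EFin //.
- by rewrite integral_normal_pdf mule1.
- by move=> t _; rewrite lee_fin normal_pdf_ge0.
- by apply/measurable_EFinP; exact: measurable_normal_pdf.
Qed.

Lemma meas_mgf (s a b : R) :
  measurable_fun setT (fun t : R => expR (b * (t - a)) * normal_pdf a s t).
Proof.
apply: measurable_funM; last exact: measurable_normal_pdf.
apply: measurableT_comp; first exact: measurable_expR.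
apply: measurable_funM => //; exact: measurable_funB.
Qed.

Lemma meas_box (s a r : R) :
  measurable_fun setT (fun t : R => \1_`[a - r, a + r] t * normal_pdf a s t).
Proof.
apply: measurable_funM; last exact: measurable_normal_pdf.
exact: measurable_indic.
Qed.

Lemma box_mass_lb1 (s a r : R) : s != 0 -> 0 < r ->
  ((1 - 2 * expR (- r^+2 / (s^+2 *+ 2)))%:E <=
    \int[mu]_t (\1_`[a - r, a + r] t * normal_pdf a s t)%:E)%E.
Proof.
move=> s0 r0.
set c := r / s^+2.
set E := expR (- r^+2 / (s^+2 *+ 2)).
have hE : expR (- (c * r)) * expR (c^+2 * s^+2 / 2) = E.
  rewrite -expRD /E; congr expR; rewrite /c; field; exact: s0.
have hE' : expR (- (c * r)) * expR ((-c)^+2 * s^+2 / 2) = E.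
  by rewrite sqrrN.
have key : (\int[mu]_t (normal_pdf a s t)%:E <=
   \int[mu]_t ((\1_`[a - r, a + r] t * normal_pdf a s t)%:E +
     ((expR (- (c * r)))%:E * (expR (c * (t - a)) * normal_pdf a s t)%:E +
      (expR (- (c * r)))%:E * (expR ((- c) * (t - a)) * normal_pdf a s t)%:E)))%E.
  apply: ge0_le_integral => //.
  - by move=> t _; rewrite lee_fin normal_pdf_ge0.
  - by apply/measurable_EFinP; exact: measurable_normal_pdf.
  - apply: emeasurable_funD; first by apply/measurable_EFinP; exact: meas_box.
    apply: emeasurable_funD; apply: emeasurable_funM => //;
      by apply/measurable_EFinP; exact: meas_mgf.
  - move=> t _; rewrite -!EFinM -!EFinD lee_fin.
    have p0 := normal_pdf_ge0 a s t.
    have c0 : 0 < c by rewrite /c divr_gt0 // exprn_even_gt0.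
    rewrite !mulrA -!expRD.
    have [tI|tI] := boolP (t \in [set` `[a - r, a + r]]).
      by rewrite indicE tI mul1r lerDl addr_ge0 // mulr_ge0 // expR_ge0.
    rewrite indicE (negbTE tI) mul0r add0r.
    move/negP: tI => tI.
    have : ~~ (t \in `[a - r, a + r]) by apply/negP => h; apply: tI; rewrite in_setE.
    rewrite in_itv /= negb_and -!ltNge => /orP [ta|ta].
      rewrite -[X in X <= _]add0r lerD //; first by rewrite mulr_ge0 // expR_ge0.
      rewrite -[X in X <= _]mul1r ler_wpM2r // -expR0 ler_expR.
      rewrite (_ : - (c * r) + - c * (t - a) = c * (a - r - t)); last by ring.
      by apply: mulr_ge0; [exact: ltW | rewrite subr_ge0 ltW].
    rewrite -[X in X <= _]addr0 lerD //; last by rewrite mulr_ge0 // expR_ge0.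
    rewrite -[X in X <= _]mul1r ler_wpM2r // -expR0 ler_expR.
    rewrite (_ : - (c * r) + c * (t - a) = c * (t - (a + r))); last by ring.
    by apply: mulr_ge0; [exact: ltW | rewrite subr_ge0 ltW].
rewrite integral_normal_pdf in key.
rewrite ge0_integralD // in key; first last.
- apply: emeasurable_funD; apply: emeasurable_funM => //;
    by apply/measurable_EFinP; exact: meas_mgf.
- by move=> t _; rewrite adde_ge0 // mule_ge0 // lee_fin ?expR_ge0 // mulr_ge0 ?expR_ge0 ?normal_pdf_ge0.
- by apply/measurable_EFinP; exact: meas_box.
- by move=> t _; rewrite lee_fin mulr_ge0 ?normal_pdf_ge0 // indicE.
rewrite ge0_integralD // in key; first last.
- by apply: emeasurable_funM => //; apply/measurable_EFinP; exact: meas_mgf.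
- by move=> t _; rewrite mule_ge0 // lee_fin ?expR_ge0 // mulr_ge0 ?expR_ge0 ?normal_pdf_ge0.
- by apply: emeasurable_funM => //; apply/measurable_EFinP; exact: meas_mgf.
- by move=> t _; rewrite mule_ge0 // lee_fin ?expR_ge0 // mulr_ge0 ?expR_ge0 ?normal_pdf_ge0.
rewrite !ge0_integralZl_EFin // ?expR_ge0 in key; first last.
- by apply/measurable_EFinP; exact: meas_mgf.
- by move=> t _; rewrite lee_fin mulr_ge0 ?expR_ge0 ?normal_pdf_ge0.
- by apply/measurable_EFinP; exact: meas_mgf.
- by move=> t _; rewrite lee_fin mulr_ge0 ?expR_ge0 ?normal_pdf_ge0.
rewrite !mgf // -!EFinM hE hE' -EFinD in key.
rewrite EFinB leeBlDr // (_ : 2 * E = E + E); [by [] | by ring].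
Qed.
End S1.
Section S2.
Variable R : realType.
Local Notation mu := (@lebesgue_measure R).
Lemma box_mass_lb2 (s a r : R) : s != 0 -> 0 < r ->
  ((normal_peak s * expR (- r^+2 / (s^+2 *+ 2)) * (r *+ 2))%:E <=
    \int[mu]_t (\1_`[a - r, a + r] t * normal_pdf a s t)%:E)%E.
Proof.
move=> s0 r0.
set K := normal_peak s * expR (- r^+2 / (s^+2 *+ 2)).
have K0 : 0 <= K by rewrite mulr_ge0 ?normal_peak_ge0 ?expR_ge0.
have -> : (K * (r *+ 2))%:E = (\int[mu]_t (K%:E * (\1_`[a - r, a + r] t)%:E))%E.
  rewrite ge0_integralZl_EFin //; try (by move=> t _; rewrite lee_fin indicE);
    try (by apply/measurable_EFinP; exact: measurable_indic).
  rewrite integral_indic // setIT.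
  have hm : (mu [set` `[a - r, a + r]] = ((a + r) - (a - r))%:E).
    rewrite lebesgue_measure_itv /= lte_fin ifT //.
    by rewrite ltrBlDr -addrA ltrDl addr_gt0.
  transitivity (K%:E * ((a+r) - (a-r))%:E)%E; last first.
    by congr (_ * _)%E; exact/esym/hm.
  by rewrite -EFinM; congr EFin; congr (_ * _); rewrite mulr2n; ring.
apply: ge0_le_integral => //.
- by move=> t _; rewrite -EFinM lee_fin mulr_ge0 // indicE.
- by apply/measurable_EFinP; apply: measurable_funM => //; exact: measurable_indic.
- by apply/measurable_EFinP; exact: meas_box.
move=> t _; rewrite -EFinM lee_fin mulrC.
have [tI|tI] := boolP (t \in [set` `[a - r, a + r]]); last first.
  by rewrite indicE (negbTE tI) !mul0r.
rewrite indicE tI !mul1r normal_pdfE // /normal_fun /K ler_wpM2l ?normal_peak_ge0 //.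
rewrite ler_expR !mulNr lerN2 ler_wpM2r //.
  by rewrite invr_ge0 mulrn_wge0 // sqr_ge0.
move: tI; rewrite in_setE /= in_itv /= => /andP [h1 h2].
have h3 : 0 <= r - (t - a) by lra.
have h4 : 0 <= r + (t - a) by lra.
have := mulr_ge0 h3 h4; rewrite -subr_ge0.
by rewrite (_ : r ^+ 2 - (t - a) ^+ 2 = (r - (t - a)) * (r + (t - a))) //; ring.
Qed.
End S2.
Section S3.
Variable R : realType.
Local Notation mu := (@lebesgue_measure R).

Lemma int_le_nm (f g : R -> \bar R) : (forall x, (0 <= f x)%E) ->
  (forall x, (f x <= g x)%E) -> (\int[mu]_x f x <= \int[mu]_x g x)%E.
Proof.
move=> f0 fg.
have g0 : forall x, (0 <= g x)%E by move=> x; exact: le_trans (f0 x) (fg x).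
rewrite !ge0_integralTE //.
apply: le_ereal_sup => _ [h hf <-]; exists h => //= x.
exact: le_trans (hf x) (fg x).
Qed.

Lemma iint_ge0 d (f : 'rV[R]_d -> \bar R) : (forall x, (0 <= f x)%E) ->
  (0 <= iint f)%E.
Proof.
elim: d f => [|d IH] f f0 /=; first exact: f0.
by apply: integral_ge0 => t _; apply: IH => v.
Qed.

Lemma iint_le d (f g : 'rV[R]_d -> \bar R) : (forall x, (0 <= f x)%E) ->
  (forall x, (f x <= g x)%E) -> (iint f <= iint g)%E.
Proof.
elim: d f g => [|d IH] f g f0 fg /=; first exact: fg.
apply: int_le_nm => t; first by apply: iint_ge0.
by apply: IH.
Qed.

Lemma rowK0 d (t : R) (v : 'rV[R]_d) :
  (row_mx (\row_(j < 1) t) v) 0 ord0 = t.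
Proof.
rewrite (_ : ord0 = lshift d (ord0 : 'I_1)); last exact: val_inj.
by rewrite row_mxEl mxE.
Qed.
Lemma rowKS d (t : R) (v : 'rV[R]_d) i :
  (row_mx (\row_(j < 1) t) v) 0 (lift ord0 i) = v 0 i.
Proof.
rewrite (_ : lift ord0 i = rshift 1 i); last exact: val_inj.
by rewrite row_mxEr.
Qed.
Lemma iint_prod_ge d (c : R) (h : 'I_d -> R -> R) (cs : 'I_d -> R) :
  0 <= c -> (forall i t, 0 <= h i t) -> (forall i, measurable_fun setT (h i)) ->
  (forall i, 0 <= cs i) -> (forall i, ((cs i)%:E <= \int[mu]_t (h i t)%:E)%E) ->
  ((c * \prod_i cs i)%:E <= iint (fun z : 'rV[R]_d => (c * \prod_i h i (z 0 i))%:E))%E.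
Proof.
elim: d c h cs => [|d IH] c h cs c0 h0 mh cs0 hcs.
  by rewrite /= !big_ord0.
rewrite /=.
set c' := c * \prod_(i < d) cs (lift ord0 i).
have c'0 : 0 <= c' by rewrite mulr_ge0 // prodr_ge0.
apply: (@le_trans _ _ (\int[mu]_t (c'%:E * (h ord0 t)%:E))%E).
  rewrite ge0_integralZl_EFin //; last 2 first.
  - by move=> t _; rewrite lee_fin.
  - by apply/measurable_EFinP; exact: mh.
  rewrite (_ : c * _ = c' * cs ord0); last by rewrite big_ord_recl /c'; ring.
  by rewrite EFinM; apply: lee_wpmul2l; [rewrite lee_fin | exact: hcs].
apply: int_le_nm => t; first by rewrite -EFinM lee_fin mulr_ge0.
rewrite (_ : (fun v : 'rV[R]_d => _) =
    (fun v : 'rV[R]_d => ((c * h ord0 t) * \prod_(i < d) h (lift ord0 i) (v 0 i))%:E)); last first.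
  apply/funext => v; rewrite big_ord_recl rowK0 mulrA; congr EFin; congr (_ * _).
  by apply: eq_bigr => i _; rewrite rowKS.
rewrite -EFinM.
have := IH (c * h ord0 t) (fun i => h (lift ord0 i)) (fun i => cs (lift ord0 i)).
rewrite mulr_ge0 // => /(_ isT (fun i => h0 _) (fun i => mh _) (fun i => cs0 _) (fun i => hcs _)).
by rewrite /c' mulrAC.
Qed.
End S3.
Section S5.
Variable R : realType.
Local Notation mu := (@lebesgue_measure R).
Lemma iint_prod_le d (c : R) (h : 'I_d -> R -> R) (cs : 'I_d -> R) :
  0 <= c -> (forall i t, 0 <= h i t) -> (forall i, measurable_fun setT (h i)) ->
  (forall i, (\int[mu]_t (h i t)%:E <= (cs i)%:E)%E) ->
  (iint (fun z : 'rV[R]_d => (c * \prod_i h i (z 0 i))%:E) <= (c * \prod_i cs i)%:E)%E.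
Proof.
have cs0 : forall (d : nat) (h : 'I_d -> R -> R) (cs : 'I_d -> R), (forall i t, 0 <= h i t) ->
  (forall i, (\int[mu]_t (h i t)%:E <= (cs i)%:E)%E) -> forall i, 0 <= cs i.
  move=> d' h' cs' h0 hcs i; rewrite -lee_fin; apply: le_trans (hcs i).
  by apply: integral_ge0 => t _; rewrite lee_fin.
elim: d c h cs => [|d IH] c h cs c0 h0 mh hcs.
  by rewrite /= !big_ord0.
have cs0' := cs0 _ _ _ h0 hcs.
rewrite /=.
set c' := c * \prod_(i < d) cs (lift ord0 i).
have c'0 : 0 <= c' by rewrite mulr_ge0 // prodr_ge0.
apply: (@le_trans _ _ (\int[mu]_t (c'%:E * (h ord0 t)%:E))%E); last first.
  rewrite ge0_integralZl_EFin //; last 2 first.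
  - by move=> t _; rewrite lee_fin.
  - by apply/measurable_EFinP; exact: mh.
  rewrite (_ : c * _ = c' * cs ord0); last by rewrite big_ord_recl /c'; ring.
  by rewrite (EFinM c'); apply: lee_wpmul2l; [rewrite lee_fin | exact: hcs].
apply: int_le_nm => t.
  apply: iint_ge0 => v; rewrite lee_fin mulr_ge0 // prodr_ge0 // => i _.
rewrite (_ : (fun v : 'rV[R]_d => _) =
    (fun v : 'rV[R]_d => ((c * h ord0 t) * \prod_(i < d) h (lift ord0 i) (v 0 i))%:E)); last first.
  apply/funext => v; rewrite big_ord_recl rowK0 mulrA; congr EFin; congr (_ * _).
  by apply: eq_bigr => i _; rewrite rowKS.
rewrite -EFinM.
have := IH (c * h ord0 t) (fun i => h (lift ord0 i)) (fun i => cs (lift ord0 i)).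
rewrite mulr_ge0 // => /(_ isT (fun i => h0 _) (fun i => mh _) (fun i => hcs _)).
by rewrite /c' mulrAC.
Qed.
End S5.
Section S6.
Variable R : realType.
Lemma gauss_prod d (s : R) (x z : 'rV[R]_d) : s != 0 ->
  gauss_kernel s (x - z) = \prod_i normal_pdf (x 0 i) s (z 0 i).
Proof.
move=> s0; rewrite /gauss_kernel.
under eq_bigr do rewrite normal_pdfE //.
rewrite big_split /= prodr_const card_ord /normal_peak /normal_fun.
congr (_ ^+ _ * _).
  by congr (_^-1); congr Num.sqrt; rewrite mulr2n; ring.
rewrite -expR_sum; congr expR.
rewrite /sqnorm mulNr mulr_suml -sumrN.
apply: eq_bigr => i _; rewrite !mxE.
by rewrite mulr2n; field.
Qed.
End S6.
Section S7.
Variable R : realType.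
Local Notation mu := (@lebesgue_measure R).

Definition dot {d} (u v : 'rV[R]_d) : R := \sum_i u 0 i * v 0 i.

Lemma smooth_upper d (p : 'rV[R]_d -> R) (s : R) (x w g : 'rV[R]_d) (K : R) :
  s != 0 -> 0 <= K -> (forall z, 0 <= p z) ->
  (forall z, p z <= K * expR (dot g (z - w))) ->
  (iint (fun z => (p z * gauss_kernel s (x - z))%:E) <=
    (K * expR (dot g (x - w)) * expR (s^+2 * sqnorm g / 2))%:E)%E.
Proof.
move=> s0 K0 p0 pK.
set C := K * expR (dot g (x - w)).
have C0 : 0 <= C by rewrite mulr_ge0 // expR_ge0.
apply: (@le_trans _ _ (iint (fun z : 'rV[R]_d => (C * \prod_i
   (expR (g 0 i * (z 0 i - x 0 i)) * normal_pdf (x 0 i) s (z 0 i)))%:E))).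
  apply: iint_le => z; first by rewrite lee_fin mulr_ge0 // gauss_prod // prodr_ge0 // => i _; exact: normal_pdf_ge0.
  rewrite lee_fin gauss_prod //.
  apply: (@le_trans _ _ (K * expR (dot g (z - w)) * \prod_i normal_pdf (x 0 i) s (z 0 i))).
    by rewrite ler_wpM2r // prodr_ge0 // => i _; exact: normal_pdf_ge0.
  rewrite big_split /= mulrA /C.
  apply: ler_wpM2r; first by rewrite prodr_ge0 // => i _; exact: normal_pdf_ge0.
  rewrite -mulrA; apply: ler_wpM2l => //.
  rewrite -expR_sum -expRD ler_expR /dot -big_split /=.
  by rewrite le_eqVlt; apply/orP; left; apply/eqP/eq_bigr => i _; rewrite !mxE; ring.
have -> : expR (s ^+ 2 * sqnorm g / 2) = \prod_(i < d) expR (g 0 i ^+ 2 * s ^+ 2 / 2).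
  rewrite -expR_sum /sqnorm; congr expR.
  by rewrite mulr_sumr mulr_suml; apply: eq_bigr => i _; ring.
apply: (@iint_prod_le R d C (fun i t => expR (g 0 i * (t - x 0 i)) * normal_pdf (x 0 i) s t) (fun i => expR (g 0 i ^+ 2 * s ^+ 2 / 2))) => //.
- by move=> i t; rewrite mulr_ge0 ?expR_ge0 ?normal_pdf_ge0.
- by move=> i; exact: meas_mgf.
- by move=> i; rewrite mgf.
Qed.

Lemma smooth_lower d (p : 'rV[R]_d -> R) (s : R) (x : 'rV[R]_d) (r th c : R) :
  s != 0 -> 0 <= th -> 0 <= c -> (forall z, 0 <= p z) ->
  (forall z : 'rV[R]_d, (forall i, z 0 i \in [set` `[x 0 i - r, x 0 i + r]]) -> th <= p z) ->
  (forall a, (c%:E <= \int[mu]_t (\1_`[a - r, a + r] t * normal_pdf a s t)%:E)%E) ->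
  ((th * c ^+ d)%:E <= iint (fun z => (p z * gauss_kernel s (x - z))%:E))%E.
Proof.
move=> s0 th0 c0 p0 pth hc.
have -> : c ^+ d = \prod_(i < d) c by rewrite prodr_const card_ord.
apply: le_trans (@iint_prod_ge R d th (fun i t => \1_`[x 0 i - r, x 0 i + r] t * normal_pdf (x 0 i) s t) (fun=> c) th0 _ _ (fun _ => c0) (fun i => hc (x 0 i))) _.
- by move=> i t; rewrite mulr_ge0 ?normal_pdf_ge0 // indicE.
- by move=> i; exact: meas_box.
apply: iint_le => z; first by rewrite lee_fin mulr_ge0 // prodr_ge0 // => i _; rewrite mulr_ge0 ?normal_pdf_ge0 // indicE.
rewrite lee_fin gauss_prod //.
have [allin|notall] := pselect (forall i, z 0 i \in [set` `[x 0 i - r, x 0 i + r]]).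
  under eq_bigr do rewrite indicE allin mul1r.
  by apply: ler_wpM2r; [rewrite prodr_ge0 // => i _; exact: normal_pdf_ge0 | exact: pth].
have [i /negP zi] : exists i, ~ (z 0 i \in [set` `[x 0 i - r, x 0 i + r]]).
  by apply: contra_notP notall => h i; apply: contra_notP (h) => hi; exists i.
rewrite (bigD1 i) //= indicE (negbTE zi) mul0r mul0r mulr0.
by rewrite mulr_ge0 ?p0 // prodr_ge0 // => j _; exact: normal_pdf_ge0.
Qed.
End S7.
Arguments dot {R d}.
Section SB.
Variable R : realType.

Lemma rv_norm_lt d (v : 'rV[R]_d) e : 0 < e -> (forall i, `|v 0 i| < e) -> `|v| < e.
Proof.
move=> e0 h.
rewrite (_ : `|v| = mx_norm v) // mx_normrE.
apply: bigmax_lt => // -[i j] _ /=.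
by rewrite (ord1 i).
Qed.

Lemma cont_box d (p : 'rV[R]_d -> R) (x : 'rV[R]_d) (th : R) :
  {for x, continuous p} -> th < p x ->
  exists2 r, 0 < r & forall z : 'rV[R]_d,
    (forall i, z 0 i \in [set` `[x 0 i - r, x 0 i + r]]) -> th <= p z.
Proof.
move=> cp thp.
have := (@cvgrPdist_lt _ _ _ _ _ p (p x)).1 cp (p x - th); rewrite subr_gt0 => /(_ _ thp).
move=> /nbhs_normP [e /= e0 he].
exists (e / 2); first by rewrite divr_gt0.
move=> z hz.
have : `|p x - p z| < p x - th.
  apply: he; rewrite /ball_ /=.
  apply: rv_norm_lt => // i; rewrite !mxE.
  move: (hz i); rewrite in_setE /= in_itv /= => /andP [h1 h2].
  rewrite ltr_norml; apply/andP; split; lra.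
rewrite ltr_norml => /andP [_ h]; lra.
Qed.
End SB.
Section SB2.
Variable R : realType.

Lemma sq_sub d (a b : 'rV[R]_d) : sqnorm (a - b) = sqnorm a - 2 * dot a b + sqnorm b.
Proof.
rewrite /sqnorm /dot mulr_sumr -sumrB -big_split /=.
by apply: eq_bigr => i _; rewrite !mxE; ring.
Qed.

Lemma sqnorm_ge0 d (v : 'rV[R]_d) : 0 <= sqnorm v.
Proof. by rewrite /sqnorm sumr_ge0 // => i _; exact: sqr_ge0. Qed.

Lemma sq_coord d (v : 'rV[R]_d) i : v 0 i ^+ 2 <= sqnorm v.
Proof.
rewrite /sqnorm (bigD1 i) //= lerDl sumr_ge0 // => j _; exact: sqr_ge0.
Qed.

Lemma sqnormZ d (t : R) (v : 'rV[R]_d) : sqnorm (t *: v) = t ^+ 2 * sqnorm v.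
Proof. by rewrite /sqnorm mulr_sumr; apply: eq_bigr => i _; rewrite !mxE; ring. Qed.

Lemma dotZr d (t : R) (u v : 'rV[R]_d) : dot u (t *: v) = t * dot u v.
Proof. by rewrite /dot mulr_sumr; apply: eq_bigr => i _; rewrite !mxE; ring. Qed.

Lemma dotZl d (t : R) (u v : 'rV[R]_d) : dot (t *: u) v = t * dot u v.
Proof. by rewrite /dot mulr_sumr; apply: eq_bigr => i _; rewrite !mxE; ring. Qed.

Lemma dotNl d (u v : 'rV[R]_d) : dot (- u) v = - dot u v.
Proof. by rewrite /dot -sumrN; apply: eq_bigr => i _; rewrite !mxE; ring. Qed.
End SB2.
Theorem lemma4 (R : realType) (d : nat) (p : 'rV[R]_d -> R) (tau : R)
    (y : 'rV[R]_d) (x0 : 'rV[R]_d) (xs : R -> 'rV[R]_d) :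
  is_density p ->
  (forall x, 0 < p x) ->
  log_concave p ->
  thrice_differentiable p ->
  (exists M : R, forall x, third_deriv_frob2 (fun z => ln (p z)) x <= M) ->
  0 < tau ->
  is_argmin (prox_obj p tau y) x0 ->
  (forall sigma, 0 < sigma -> is_argmin (prox_obj (smoothed p sigma) tau y) (xs sigma)) ->
  xs sigma @[sigma --> 0^'+] --> x0.
Proof.
move=> _ ppos lc [dp _ _] _ tau0 hx0 hxs.
have p0 : forall z, 0 <= p z by move=> z; exact: ltW.
set g := tau^-1 *: (x0 - y).
have hg : forall v, tau * dot g v = - dot (y - x0) v.
  move=> v; rewrite dotZl mulrA mulfV ?gt_eqF // mul1r -dotNl opprB //.
have sub : forall z, ln (p z) <= ln (p x0) + dot g (z - x0).
  move=> z.
  set v := z - x0; set Sz := sqnorm v; set D := dot (x0 - y) v.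
  have Sz0 : 0 <= Sz by exact: sqnorm_ge0.
  have key : forall t, 0 < t <= 1 -> tau * (ln (p z) - ln (p x0)) <= D + t * Sz / 2.
    move=> t /andP [t0 t1].
    have h1 := hx0 (t *: z + (1 - t) *: x0).
    have h2 := lc z x0 t; rewrite (ltW t0) t1 /= in h2; have {}h2 := h2 isT.
    rewrite /prox_obj in h1.
    have e : y - (t *: z + (1 - t) *: x0) = (y - x0) - t *: v.
      by apply/rowP => i; rewrite !mxE; ring.
    rewrite e (@sq_sub R d (y - x0) (t *: v)) sqnormZ dotZr -/Sz in h1.
    have eD : dot (y - x0) v = - D by rewrite /D -dotNl opprB.
    rewrite eD in h1.
    have hh := ler_wpM2l (ltW tau0) h2.
    have : t * (tau * (ln (p z) - ln (p x0))) <= t * (D + t * Sz / 2).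
      set L0 := ln (p x0) in h1 hh *; set Lz := ln (p z) in hh *.
      set Lt := ln (p (t *: z + (1 - t) *: x0)) in h1 hh.
      set S0 := sqnorm (y - x0) in h1.
      nra.
    by rewrite ler_pM2l.
  apply/ler_addgt0Pr => e1 e10.
  set e := tau * e1.
  have e0 : 0 < e by rewrite mulr_gt0.
  have eS : 0 < e + Sz by rewrite ltr_wpDr.
  have := key (e / (e + Sz)).
  rewrite divr_gt0 //= ler_pdivrMr // mul1r lerDl Sz0 => /(_ isT).
  move=> h.
  have h' : tau * (ln (p z) - ln (p x0)) <= D + e.
    apply: le_trans h _; rewrite lerD2l.
    rewrite ler_pdivrMr // mulrAC ler_pdivrMr //.
    nra.
  have hD : tau * dot g (z - x0) = D by rewrite hg /D -dotNl opprB.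
  rewrite -(ler_pM2l tau0) !mulrDr hD -/e.
  lra.
have pub : forall z, p z <= p x0 * expR (dot g (z - x0)).
  move=> z; rewrite -[p z]lnK ?posrE // -{1}[p x0]lnK ?posrE // -expRD ler_expR.
  exact: sub.
have gk0 : forall s (v : 'rV[R]_d), 0 <= gauss_kernel s v.
  move=> s v; rewrite /gauss_kernel mulr_ge0 ?expR_ge0 // exprn_ge0 // invr_ge0 sqrtr_ge0 //.
have up : forall s x, 0 < s -> (iint (fun z => (p z * gauss_kernel s (x - z))%:E) <=
    (p x0 * expR (dot g (x - x0)) * expR (s^+2 * sqnorm g / 2))%:E)%E.
  move=> s x s0; apply: smooth_upper; [exact: lt0r_neq0 | exact: ltW (ppos x0) | exact: p0 | exact: pub].
have fin : forall s x, 0 < s -> (smoothed p s x)%:E =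
    iint (fun z => (p z * gauss_kernel s (x - z))%:E).
  move=> s x s0; rewrite /smoothed fineK // ge0_fin_numE.
    exact: le_lt_trans (up s x s0) (ltry _).
  by apply: iint_ge0 => z; rewrite lee_fin mulr_ge0.
have sup : forall s x, 0 < s -> smoothed p s x <=
    p x0 * expR (dot g (x - x0)) * expR (s^+2 * sqnorm g / 2).
  by move=> s x s0; rewrite -lee_fin fin //; exact: up.
have spos : forall s x, 0 < s -> 0 < smoothed p s x.
  move=> s x s0.
  have hpx : p x / 2 < p x by have := ppos x; lra.
  have [r r0 hr] := @cont_box R d p x (p x / 2) (differentiable_continuous (dp x)) hpx.
  set c := normal_peak s * expR (- r ^+ 2 / (s ^+ 2 *+ 2)) * (r *+ 2).
  have c0 : 0 < c by rewrite /c !mulr_gt0 ?expR_gt0 ?normal_peak_gt0 ?gt_eqF // mulrn_wgt0.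
  have hx0' : 0 <= p x / 2 by have := ppos x; lra.
  have := @smooth_lower R d p s x r (p x / 2) c (lt0r_neq0 s0) hx0' (ltW c0) p0 hr
    (fun a => @box_mass_lb2 R s a r (lt0r_neq0 s0) r0).
  rewrite -fin // lee_fin => h; apply: lt_le_trans h.
  by rewrite mulr_gt0 ?exprn_gt0 // divr_gt0.
have main : forall s, 0 < s -> 2^-1 * sqnorm (xs s - x0) <=
    tau * (ln (p x0) - ln (smoothed p s x0)) + tau * (s^+2 * sqnorm g / 2).
  move=> s s0.
  have h1 := hxs s s0 x0; rewrite /prox_obj in h1.
  have hl : ln (smoothed p s (xs s)) <=
      ln (p x0) + dot g (xs s - x0) + s^+2 * sqnorm g / 2.
    have U0 : 0 < p x0 * expR (dot g (xs s - x0)) * expR (s ^+ 2 * sqnorm g / 2).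
      by rewrite !mulr_gt0 ?expR_gt0.
    apply: (@le_trans _ _ (ln (p x0 * expR (dot g (xs s - x0)) * expR (s ^+ 2 * sqnorm g / 2)))).
      by rewrite ler_ln ?posrE ?spos //; exact: sup.
    by rewrite !lnM ?posrE ?expR_gt0 ?mulr_gt0 ?expR_gt0 // !expRK.
  have e : y - xs s = (y - x0) - (xs s - x0) by apply/rowP => i; rewrite !mxE; ring.
  rewrite e (@sq_sub R d (y - x0) (xs s - x0)) in h1.
  have hD := hg (xs s - x0).
  have hh := ler_wpM2l (ltW tau0) hl.
  set Lx := ln (smoothed p s (xs s)) in h1 hh.
  set L0 := ln (smoothed p s x0) in h1 *.
  set K := s ^+ 2 * sqnorm g / 2 in hh *.
  set Dg := dot g (xs s - x0) in hh hD.
  set Dy := dot (y - x0) (xs s - x0) in h1 hD.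
  set S0 := sqnorm (y - x0) in h1.
  set Sv := sqnorm (xs s - x0) in h1 *.
  rewrite !mulrDr in hh.
  lra.
have low : forall δ, 0 < δ -> exists2 B, 0 < B & forall s, 0 < s -> s < B ->
    ln (p x0) - ln (smoothed p s x0) <= δ * (d.+1)%:R.
  move=> δ δ0.
  set th := p x0 * expR (- δ).
  have thlt : th < p x0 by rewrite /th gtr_pMr // expR_lt1 oppr_lt0.
  have [r r0 hr] := @cont_box R d p x0 th (differentiable_continuous (dp x0)) thlt.
  set q := 1 - expR (- δ).
  have q0 : 0 < q by rewrite /q subr_gt0 expR_lt1 oppr_lt0.
  have B0 : 0 < q * r ^+ 2 / 4 by rewrite divr_gt0 // mulr_gt0 // exprn_gt0.
  exists (Num.min 1 (q * r ^+ 2 / 4)); first by rewrite lt_min ltr01 B0.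
  move=> s s0; rewrite lt_min => /andP [s1 s2].
  set u := r ^+ 2 / (s ^+ 2 *+ 2).
  have u0 : 0 < u by rewrite divr_gt0 ?exprn_gt0 // mulrn_wgt0 // exprn_gt0.
  have hu : expR (- u) <= u^-1.
    rewrite expRN lef_pV2 ?posrE ?expR_gt0 //.
    have := expR_ge1Dx u; lra.
  have hu2 : 2 * u^-1 <= q.
    rewrite /u invf_div mulrA ler_pdivrMr ?exprn_gt0 //.
    rewrite mulr2n.
    have ss : s ^+ 2 <= s by rewrite expr2 ger_pMl // ltW.
    have : s * 4 < q * r ^+ 2 by rewrite -ltr_pdivlMr.
    set R2 := r ^+ 2 in B0 *; set S2 := s ^+ 2 in ss *.
    lra.
  have cge : expR (- δ) <= 1 - 2 * expR (- r ^+ 2 / (s ^+ 2 *+ 2)).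
    rewrite (_ : - r ^+ 2 / (s ^+ 2 *+ 2) = - u); last by rewrite /u mulNr.
    rewrite /q in hu2; lra.
  have c0 : 0 <= 1 - 2 * expR (- r ^+ 2 / (s ^+ 2 *+ 2)) := le_trans (expR_ge0 _) cge.
  have th0 : 0 <= th by rewrite /th mulr_ge0 ?expR_ge0 ?ltW.
  have := @smooth_lower R d p s x0 r th _ (lt0r_neq0 s0) th0 c0 p0 hr
    (fun a => @box_mass_lb1 R s a r (lt0r_neq0 s0) r0).
  rewrite -fin // lee_fin => hlow.
  have hlow' : p x0 * expR (- (δ * (d.+1)%:R)) <= smoothed p s x0.
    apply: le_trans hlow.
    rewrite /th -mulrA; apply: ler_wpM2l; first exact: ltW.
    rewrite -mulNr mulrC expRM_natl exprS.
    apply: ler_wpM2l; first exact: expR_ge0.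
    by apply: lerXn2r; rewrite ?nnegrE ?expR_ge0.
  have := hlow'; rewrite -ler_ln ?posrE ?mulr_gt0 ?expR_gt0 ?spos //.
  rewrite lnM ?posrE ?expR_gt0 // expRK.
  lra.
apply/cvgrPdist_lt => e e0.
set Sg := sqnorm g.
have Sg0 : 0 <= Sg by exact: (@sqnorm_ge0 R d g).
have n0 : 0 < (d.+1)%:R :> R by rewrite ltr0n.
set δ := e^+2 / (8 * tau * (d.+1)%:R).
have δ0 : 0 < δ by rewrite divr_gt0 ?exprn_gt0 // !mulr_gt0.
have [B B0 hB] := low δ δ0.
have T0 : 0 <= tau * Sg by rewrite mulr_ge0 // ltW.
have C0 : 0 < e^+2 / (4 * (tau * Sg + 1)).
  by rewrite divr_gt0 ?exprn_gt0 // mulr_gt0 // ltr_wpDl.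
near=> s.
have s0 : 0 < s by near: s; exact: nbhs_right_gt.
have s1 : s < 1 by near: s; exact: nbhs_right_lt ltr01.
have s2 : s < B by near: s; exact: nbhs_right_lt.
have s3 : s < e^+2 / (4 * (tau * Sg + 1)) by near: s; exact: nbhs_right_lt.
have hm := main s s0.
have hl := hB s s0 s2.
have t1 : tau * (ln (p x0) - ln (smoothed p s x0)) <= e^+2 / 8.
  apply: le_trans (ler_wpM2l (ltW tau0) hl) _.
  rewrite le_eqVlt; apply/orP; left; apply/eqP; rewrite /δ.
  field; rewrite ?lt0r_neq0 //.
have t2 : tau * (s^+2 * Sg / 2) <= e^+2 / 8.
  have h4 : s * (4 * (tau * Sg + 1)) < e^+2 by rewrite -ltr_pdivlMr // mulr_gt0 // ltr_wpDl.
  have ss : s ^+ 2 <= s by rewrite expr2 ger_pMl // ltW.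
  have h5 : s ^+ 2 * (tau * Sg) <= s * (tau * Sg) by exact: ler_wpM2r.
  rewrite (_ : tau * (s ^+ 2 * Sg / 2) = s ^+ 2 * (tau * Sg) / 2); last by ring.
  set T := tau * Sg in T0 h4 h5 *; set S2 := s ^+ 2 in ss h5 *.
  set ST := s * T in h5.
  have : s * (4 * (T + 1)) = 4 * ST + 4 * s by rewrite /ST; ring.
  lra.
have hSv : sqnorm (xs s - x0) < e ^+ 2.
  have hm' := le_trans hm (lerD t1 t2).
  have e2 : 0 < e ^+ 2 by rewrite exprn_gt0.
  set Sv := sqnorm (xs s - x0) in hm' *.
  set E2 := e ^+ 2 in hm' e2 *.
  lra.
rewrite -normrN opprB.
apply: rv_norm_lt => // i.
have hi := le_lt_trans (@sq_coord R d (xs s - x0) i) hSv.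
rewrite -[e in _ < e](@ger0_norm _ e) ?ltW // -!sqrtr_sqr ltr_sqrt ?exprn_gt0 //.
Unshelve. all: by end_near.
Qed.
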